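(* Let $(V,E)$ be a finite graph and $p\in[0,1]$. Define rates on $\{0,1\}^E\times\{-1,1\}^V$ as follows: (a) if $\sigma'=\sigma$ and there is $e\in E$ with $\eta'=\eta^e$ and $\gamma_\eta(e)=1$, then $c((\eta,\sigma),(\eta',\sigma'))=\big((1-p)\mathbf 1_{\eta(e)=1}+p\mathbf 1_{\eta(e)=0}\big)\mathbf 1_{(\eta,\sigma)\in\mathcal C}$; (b) if $\sigma'=\sigma$ and there is $e\in E$ with $\eta'=\eta^e$, $\gamma_\eta(e)=0$ and $\delta_\sigma(e)=1$, then $c((\eta,\sigma),(\eta',\sigma'))=\frac12\big((1-p)\mathbf 1_{\eta(e)=1}+p\mathbf 1_{\eta(e)=0}\big)\mathbf 1_{(\eta,\sigma)\in\mathcal C}$; (c) if there are $x\in V$ and $e\in E_x$ with $\eta'=\eta^e$, $\gamma_\eta(e)=0$, $\eta(e)=\delta_\sigma(e)$, and $\sigma'(y)=-\sigma(y)$ for the vertices $y$ connected to $x$ by an open path of $\eta$ not using $e$ (including $y=x$), $\sigma'(y)=\sigma(y)$ otherwise, then $c((\eta,\sigma),(\eta',\sigma'))=\frac14\big((1-p)\mathbf 1_{\eta(e)=1}\mathbf 1_{(\eta,\sigma)\in\mathcal C}+p\mathbf 1_{\eta(e)=0}\mathbf 1_{(\eta',\sigma')\in\mathcal C}\big)$; (d) all other off-diagonal rates are $0$. Let $\eta\in\{0,1\}^E$, $e\in E$ and $\sigma\in\{-1,1\}^V$ with $(\eta,\sigma)\in\mathcal C$. Then, with sums over $\sigma'\in\{-1,1\}^V$: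 if $\gamma_\eta(e)=1$, $\sum_{\sigma'}c((\eta,\sigma),(\eta^e,\sigma'))=p\mathbf 1_{\eta(e)=0}+(1-p)\mathbf 1_{\eta(e)=1}$; if $\gamma_\eta(e)=0$ and $\eta(e)=0$, the sum equals $p/2$; if $\gamma_\eta(e)=0$ and $\eta(e)=1$, the sum equals $1-p$.
   Context: Edge configurations $\eta\in\{0,1\}^E$ (1 = open), spin configurations $\sigma\in\{-1,1\}^V$. For $e=\langle x,y\rangle$, $\delta_\sigma(e)=\mathbf 1_{\sigma(x)=\sigma(y)}$. $\mathcal C=\{(\eta,\sigma):\eta(e)\le\delta_\sigma(e)\ \forall e\in E\}$. $E_x$ is the set of edges with endvertex $x$; $\eta^e$ is $\eta$ with the value at $e$ changed. For $e=\langle x,y\rangle$, $\gamma_\eta(e)=1$ if $x,y$ are connected by a path of open edges of $\eta$ not using $e$, and $0$ otherwise. *)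

(* Defs.v *)
From HB Require Import structures.
From mathcomp Require Import all_boot all_order all_algebra.
Set Implicit Arguments. Unset Strict Implicit. Unset Printing Implicit Defensive.
Import Order.TTheory GRing.Theory Num.Theory.
Local Open Scope ring_scope.

(* Edge configurations eta : {ffun E -> bool} (true = open).
   Spin configurations sigma : {ffun V -> bool} (true = +1, false = -1). *)
Section Defs.
Variables (V E : finType) (src tgt : E -> V).

Definition delta (sigma : {ffun V -> bool}) (e : E) : bool :=
  sigma (src e) == sigma (tgt e).

Definition inC (eta : {ffun E -> bool}) (sigma : {ffun V -> bool}) : bool :=
  [forall f, eta f ==> delta sigma f].

Definition flipE (eta : {ffun E -> bool}) (e : E) : {ffun E -> bool} :=
  [ffun f => if f == e then ~~ eta f else eta f].

Definition adj_wo (eta : {ffun E -> bool}) (e : E) : rel V :=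
  fun x y => [exists f, [&& f != e, eta f &
     ((src f == x) && (tgt f == y)) || ((src f == y) && (tgt f == x))]].

Definition conn_wo (eta : {ffun E -> bool}) (e : E) (x y : V) : bool :=
  connect (adj_wo eta e) x y.

Definition gamma (eta : {ffun E -> bool}) (e : E) : bool :=
  conn_wo eta e (src e) (tgt e).

Definition flip_cluster (eta : {ffun E -> bool}) (e : E) (x : V)
  (sigma : {ffun V -> bool}) : {ffun V -> bool} :=
  [ffun y => if conn_wo eta e x y then ~~ sigma y else sigma y].

Variables (R : realFieldType) (p : R).

(* the transition rates c((eta,sigma),(eta',sigma')) as in (a)-(d);
   the edge e with eta' = eta^e is unique when it exists. *)
Definition rate (eta : {ffun E -> bool}) (sigma : {ffun V -> bool})
  (eta' : {ffun E -> bool}) (sigma' : {ffun V -> bool}) : R :=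
  match [pick e | flipE eta e == eta'] with
  | None => 0
  | Some e =>
    let w := (1 - p) * (eta e)%:R + p * (~~ eta e)%:R in
    if gamma eta e then
      (if sigma' == sigma then w * (inC eta sigma)%:R else 0)
    else if (sigma' == sigma) && delta sigma e then
      2^-1 * w * (inC eta sigma)%:R
    else if [exists x, ((x == src e) || (x == tgt e)) &&
                       (sigma' == flip_cluster eta e x sigma)]
            && (eta e == delta sigma e) then
      4^-1 * ((1 - p) * (eta e)%:R * (inC eta sigma)%:R
              + p * (~~ eta e)%:R * (inC eta' sigma')%:R)
    else 0
  end.

End Defs.

(* Main.v *)
Require Import Defs.
From HB Require Import structures.
From mathcomp Require Import all_boot all_order all_algebra.
From mathcomp Require Import ring.
Import Order.TTheory GRing.Theory Num.Theory.
Local Open Scope ring_scope.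
Section S.
Variables (V E : finType) (src tgt : E -> V) (R : realFieldType) (p : R).
Variables (eta : {ffun E -> bool}) (e : E) (sigma : {ffun V -> bool}).

Lemma flipE_inj e' : flipE eta e' = flipE eta e -> e' = e.
Proof.
move=> H; have := congr1 (fun g : {ffun E -> bool} => g e) H; rewrite /= !ffunE eqxx.
by case: eqP => // _; case: (eta e).
Qed.

Lemma pick_flip : [pick e' | flipE eta e' == flipE eta e] = Some e.
Proof.
case: pickP => [e' /eqP/flipE_inj -> //|/(_ e)]; by rewrite eqxx.
Qed.

Lemma adj_sym : symmetric (adj_wo src tgt eta e).
Proof.
move=> x y; apply/existsP/existsP => -[f Hf]; exists f; move: Hf;
by case/and3P => -> -> /orP [] ->; rewrite ?orbT.
Qed.

Lemma conn_sym x y : conn_wo src tgt eta e x y = conn_wo src tgt eta e y x.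
Proof. exact: (sym_connect_sym adj_sym). Qed.

Lemma rateE sigma' : rate src tgt p eta sigma (flipE eta e) sigma' =
    let w := (1 - p) * (eta e)%:R + p * (~~ eta e)%:R in
    if gamma src tgt eta e then
      (if sigma' == sigma then w * (inC src tgt eta sigma)%:R else 0)
    else if (sigma' == sigma) && delta src tgt sigma e then
      2^-1 * w * (inC src tgt eta sigma)%:R
    else if [exists x, ((x == src e) || (x == tgt e)) &&
                       (sigma' == flip_cluster src tgt eta e x sigma)]
            && (eta e == delta src tgt sigma e) then
      4^-1 * ((1 - p) * (eta e)%:R * (inC src tgt eta sigma)%:R
              + p * (~~ eta e)%:R * (inC src tgt (flipE eta e) sigma')%:R)
    else 0.
Proof. by rewrite /rate pick_flip. Qed.
Notation s x := (flip_cluster src tgt eta e x sigma).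
Notation conn := (conn_wo src tgt eta e).

Lemma fc_self x : s x x = ~~ sigma x.
Proof. by rewrite ffunE /conn_wo connect0. Qed.

Lemma ng_neq : ~~ gamma src tgt eta e -> src e != tgt e.
Proof. by apply: contra => /eqP H; rewrite /gamma H /conn_wo connect0. Qed.

Lemma fc_st : ~~ gamma src tgt eta e -> s (src e) (tgt e) = sigma (tgt e).
Proof. by rewrite ffunE /gamma => /negbTE ->. Qed.

Lemma fc_ts : ~~ gamma src tgt eta e -> s (tgt e) (src e) = sigma (src e).
Proof. by rewrite ffunE /gamma conn_sym => /negbTE ->. Qed.

Lemma exists_fc s' : [exists x, ((x == src e) || (x == tgt e)) && (s' == s x)]
  = (s' == s (src e)) || (s' == s (tgt e)).
Proof.
apply/existsP/orP => [[x /andP[/orP[] /eqP -> ->]]|[] H]; auto.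
  by exists (src e); rewrite eqxx H.
by exists (tgt e); rewrite eqxx orbT H.
Qed.

Lemma conn_edge (x : V) f : f != e -> eta f -> conn x (src f) = conn x (tgt f).
Proof.
move=> Hf He.
have A : adj_wo src tgt eta e (src f) (tgt f).
  by apply/existsP; exists f; rewrite Hf He !eqxx.
have B : adj_wo src tgt eta e (tgt f) (src f) by rewrite adj_sym.
apply/idP/idP => H.
  exact: connect_trans H (connect1 A).
exact: connect_trans H (connect1 B).
Qed.

Lemma inC_fc x : inC src tgt eta sigma -> ~~ eta e ->
  ~~ delta src tgt sigma e -> ~~ gamma src tgt eta e ->
  (x = src e \/ x = tgt e) -> inC src tgt (flipE eta e) (s x).
Proof.
move=> hC He Hd Hg Hx; apply/forallP => f; rewrite ffunE.
case: (eqVneq f e) => [->|Hfe] /=.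
  rewrite (negbTE He) /= /delta; move: Hd; rewrite /delta.
  case: Hx => ->; rewrite ?fc_self ?fc_st ?fc_ts //;
  by case: (sigma (src e)); case: (sigma (tgt e)).
apply/implyP => Hf; move/forallP: hC => /(_ f); rewrite Hf /= /delta !ffunE.
rewrite (@conn_edge x f Hfe Hf).
by case: conn; case: (sigma (src f)); case: (sigma (tgt f)).
Qed.
End S.
Theorem proposition8 (V E : finType) (src tgt : E -> V) (R : realFieldType) (p : R)
  (hp0 : 0 <= p) (hp1 : p <= 1)
  (eta : {ffun E -> bool}) (e : E) (sigma : {ffun V -> bool})
  (hC : inC src tgt eta sigma) :
  let S := \sum_(sigma' : {ffun V -> bool})
             rate src tgt p eta sigma (flipE eta e) sigma' in
  [/\ gamma src tgt eta e -> S = p * (~~ eta e)%:R + (1 - p) * (eta e)%:R,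
      ~~ gamma src tgt eta e -> ~~ eta e -> S = p / 2 &
      ~~ gamma src tgt eta e -> eta e -> S = 1 - p].
Proof.
move=> S; rewrite /S.
under eq_bigr => s' _ do rewrite rateE.
have Hg2 : ~~ gamma src tgt eta e ->
  \sum_(s' : {ffun V -> bool}) (let w := (1 - p) * (eta e)%:R + p * (~~ eta e)%:R in
    if gamma src tgt eta e then
      (if s' == sigma then w * (inC src tgt eta sigma)%:R else 0)
    else if (s' == sigma) && delta src tgt sigma e then
      2^-1 * w * (inC src tgt eta sigma)%:R
    else if [exists x, ((x == src e) || (x == tgt e)) &&
                       (s' == flip_cluster src tgt eta e x sigma)]
            && (eta e == delta src tgt sigma e) then
      4^-1 * ((1 - p) * (eta e)%:R * (inC src tgt eta sigma)%:R
              + p * (~~ eta e)%:R * (inC src tgt (flipE eta e) s')%:R)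
    else 0) =
  (if delta src tgt sigma e then 2^-1 * ((1 - p) * (eta e)%:R + p * (~~ eta e)%:R) else 0)
  + (if eta e == delta src tgt sigma e then
       2 * 4^-1 * ((1 - p) * (eta e)%:R + p * (~~ eta e)%:R) else 0).
  move=> Hg; rewrite (negbTE Hg) /=.
  set s1 := flip_cluster src tgt eta e (src e) sigma.
  set s2 := flip_cluster src tgt eta e (tgt e) sigma.
  have n1 : s1 != sigma.
    by apply/eqP => /(congr1 (fun g : {ffun V -> bool} => g (src e))); rewrite fc_self; case: (sigma _).
  have n2 : s2 != sigma.
    by apply/eqP => /(congr1 (fun g : {ffun V -> bool} => g (tgt e))); rewrite fc_self; case: (sigma _).
  have n12 : s2 != s1.
    by apply/eqP => /(congr1 (fun g : {ffun V -> bool} => g (src e))); rewrite fc_self fc_ts //; case: (sigma _).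
  rewrite (bigD1 sigma) //= (bigD1 s1) ?n1 //= (bigD1 s2) ?n2 ?n12 //=.
  rewrite big1 ?addr0; last first.
    move=> s' /andP[/andP[/negbTE H1 /negbTE H2] /negbTE H3].
    by rewrite H1 /= exists_fc -/s1 -/s2 H2 H3.
  rewrite eqxx hC /= mulr1 !exists_fc -/s1 -/s2 !eqxx ?orbT /= (negbTE n1) (negbTE n2) /=.
  rewrite (eq_sym sigma s2) (negbTE n2) (eq_sym sigma s1) (negbTE n1) /= !mulr1.
  have I1 : ~~ eta e -> ~~ delta src tgt sigma e -> inC src tgt (flipE eta e) s1.
    by move=> He Hd; apply: inC_fc => //; left.
  have I2 : ~~ eta e -> ~~ delta src tgt sigma e -> inC src tgt (flipE eta e) s2.
    by move=> He Hd; apply: inC_fc => //; right.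
  case Hd: (delta src tgt sigma e); case Hee: (eta e) => /=.
  - by rewrite !mulr0 !addr0; field.
  - by rewrite ?andbF ?addr0 ?mulr0.
  - by rewrite !addr0.
  - rewrite I1 ?I2 ?Hee ?Hd //= !mulr1 !mulr0 !add0r.
    rewrite ?add0r; field.
  done.
split.
- move=> Hg; rewrite Hg (bigD1 sigma) //= eqxx hC big1 => [|s' /negbTE -> //].
  by rewrite addr0 mulr1 addrC.
- move=> Hg He; rewrite Hg2 //.
  by rewrite (negbTE He); case: (delta src tgt sigma e) => /=; rewrite ?addr0 ?add0r; field.
- move=> Hg He; rewrite Hg2 //.
  have Hd : delta src tgt sigma e by move/forallP: hC => /(_ e); rewrite He.
  by rewrite Hd He /=; field.
Qed.
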